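(* Let $s\ge2$, $1\le t\le k-1$, $N$ a positive multiple of $s^t$, $\lambda=N/s^t$, and $p_{\max}$ a positive integer with $p_{\max}\le\lambda$. Then the formulation symmetry group $G(k,s,t)$ of ILP (OA) equals the group $G^{\rm iso}(k,s)\cong S_s\wr S_k$, and $G(k,s,t)$ is contained in the symmetry group $G(k,s,t)^{\rm LP}$ of the LP relaxation of ILP (OA); hence $|G(k,s,t)^{\rm LP}|\ge k!(s!)^k$.
   Context: Variables $x_{\mathbf{i}}$ are indexed by $\mathbf{i}=(i_1,\dots,i_k)\in\{0,\dots,s-1\}^k$ ($x_{\mathbf i}$ is the number of times the symbol combination $\mathbf i$ occurs as a row of an $N\times k$ array). ILP (OA) is: minimize $\sum_{\mathbf i}x_{\mathbf i}$ subject to, for every $t$-subset $J\subseteq\{1,\dots,k\}$ and every $a\in\{0,\dots,s-1\}^J$, $\sum_{\mathbf i:\ i_j=a_j\ \forall j\in J}x_{\mathbf i}=\lambda$; $0\le x_{\mathbf i}\le p_{\max}$; $x_{\mathbf i}\in\mathbb{Z}$. Its LP relaxation drops integrality; with feasible set $\mathcal F$, $G(k,s,t)^{\rm LP}$ is the set of permutations $\pi$ of the index set such that $\pi(x)\in\mathcal F$ and the objective value is preserved for all $x\in\mathcal F$, where $\pi(x)_{\mathbf i}=x_{\pi^{-1}(\mathbf i)}$. For an LP/ILP written as min $c^{\top}x$ s.t. $Ax=b$, $Bx\le d$, the formulation symmetry group is the set of variable permutations $\pi$ with $\pi(c)=c$ for which there exist row permutations $\sigma,\tau$ of $A$ and $B$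 such that permuting the columns of $A,B$ by $\pi$ and rows by $\sigma,\tau$ returns $A,B$, with $b,d$ preserved by $\sigma,\tau$. $G^{\rm iso}(k,s)$ is the group of permutations of $\{0,\dots,s-1\}^k$ generated by permuting coordinates and permuting the symbols $\{0,\dots,s-1\}$ independently within each coordinate (isomorphism operations); it has order $k!(s!)^k$. *)

(* Defs.v *)
From HB Require Import structures.
From mathcomp Require Import all_boot all_order all_algebra all_fingroup.
Set Implicit Arguments. Unset Strict Implicit. Unset Printing Implicit Defensive.
Import Order.TTheory GRing.Theory Num.Theory.
Local Open Scope ring_scope.

Notation idx k s := {ffun 'I_k -> 'I_s}.

(* Rows of the equality system of ILP (OA): a pair (J, a) with J a t-subset of
   {1..k} and a in {0..s-1}^J, encoded as a partial assignment
   a : 'I_k -> option 'I_s whose domain {j | a j <> None} is J, |J| = t. *)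
Notation oa_row k s t :=
  {a : {ffun 'I_k -> option 'I_s} | #|[set j | a j != None]| == t}.

(* Generic formulation  min c^T x  s.t.  A x = b,  B x <= d  (integer data). *)

Definition formulation_sym (I RA RB : finType) (c : I -> int)
  (A : RA -> I -> int) (b : RA -> int) (B : RB -> I -> int) (d : RB -> int)
  (pi : {perm I}) : Prop :=
  (forall i, c (pi i) = c i) /\
  (exists sigma : {perm RA},
      (forall r i, A (sigma r) (pi i) = A r i) /\ (forall r, b (sigma r) = b r)) /\
  (exists tau : {perm RB},
      (forall r i, B (tau r) (pi i) = B r i) /\ (forall r, d (tau r) = d r)).

Definition lp_feasible (R : realFieldType) (I RA RB : finType)
  (A : RA -> I -> int) (b : RA -> int) (B : RB -> I -> int) (d : RB -> int)
  (x : I -> R) : Prop :=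
  (forall r, \sum_i (A r i)%:~R * x i = (b r)%:~R) /\
  (forall r, \sum_i (B r i)%:~R * x i <= (d r)%:~R).

Definition perm_vec (R : Type) (I : finType) (pi : {perm I}) (x : I -> R) : I -> R :=
  fun i => x ((pi^-1)%g i).

Definition lp_sym (R : realFieldType) (I RA RB : finType) (c : I -> int)
  (A : RA -> I -> int) (b : RA -> int) (B : RB -> I -> int) (d : RB -> int)
  (pi : {perm I}) : Prop :=
  forall x : I -> R, lp_feasible A b B d x ->
    lp_feasible A b B d (perm_vec pi x) /\
    \sum_i (c i)%:~R * perm_vec pi x i = \sum_i (c i)%:~R * x i.

Definition oa_c (k s : nat) : idx k s -> int := fun _ => 1.

Definition oa_A (k s t : nat) (r : oa_row k s t) (i : idx k s) : int :=
  if [forall j, (sval r j == None) || (sval r j == Some (i j))] then 1 else 0.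

Definition oa_b (k s t lam : nat) : oa_row k s t -> int := fun _ => lam%:Z.

(* Bounds 0 <= x_i <= pmax written as B x <= d:
   row (true, i')  :  x_{i'} <= pmax ;  row (false, i') : - x_{i'} <= 0. *)
Definition oa_B (k s : nat) (r : bool * idx k s) (i : idx k s) : int :=
  if r.1 then (r.2 == i)%:Z else - (r.2 == i)%:Z.

Definition oa_d (k s pmax : nat) (r : bool * idx k s) : int :=
  if r.1 then pmax%:Z else 0.

Definition oa_form_sym (k s t lam pmax : nat) (pi : {perm idx k s}) : Prop :=
  formulation_sym (@oa_c k s) (@oa_A k s t) (@oa_b k s t lam)
    (@oa_B k s) (@oa_d k s pmax) pi.

Definition oa_lp_sym (R : realFieldType) (k s t lam pmax : nat)
  (pi : {perm idx k s}) : Prop :=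
  lp_sym R (@oa_c k s) (@oa_A k s t) (@oa_b k s t lam)
    (@oa_B k s) (@oa_d k s pmax) pi.

Definition iso_gens (k s : nat) : {set {perm idx k s}} :=
  [set pi : {perm idx k s} |
     [exists rho : {perm 'I_k}, [forall i, pi i == [ffun j => i (rho j)]]]
  || [exists j0 : 'I_k, exists tau : {perm 'I_s},
        [forall i, pi i == [ffun j => if j == j0 then tau (i j) else i j]]]].

Definition Giso (k s : nat) : {group {perm idx k s}} := <<iso_gens k s>>%G.

Arguments oa_form_sym : clear implicits.
Arguments oa_lp_sym : clear implicits.
Arguments Giso : clear implicits.

(* Main.v *)
Require Import Defs.
From HB Require Import structures.
From mathcomp Require Import all_boot all_order all_algebra all_fingroup.
Import Order.TTheory GRing.Theory Num.Theory.
From mathcomp Require Import zify.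
Set Implicit Arguments. Unset Strict Implicit. Unset Printing Implicit Defensive.

Section G1.
Local Open Scope ring_scope.

Lemma fs_lp (R : realFieldType) (I RA RB : finType) (c : I -> int)
  (A : RA -> I -> int) (b : RA -> int) (B : RB -> I -> int) (d : RB -> int)
  (pi : {perm I}) :
  formulation_sym c A b B d pi -> lp_sym R c A b B d pi.
Proof.
case=> hc [[sg [hA hb]] [tu [hB hd]]] x [fA fB]; rewrite /perm_vec.
have re (F : I -> R) : \sum_i F i = \sum_i F (pi i) by apply: reindex_inj; apply: perm_inj.
split; last first.
  by rewrite re; apply: eq_bigr => i _; rewrite permK hc.
split=> r.
  have -> : r = sg ((sg^-1)%g r) by rewrite permKV.
  rewrite re hb -(fA ((sg^-1)%g r)); apply: eq_bigr => i _; by rewrite permK hA.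
have -> : r = tu ((tu^-1)%g r) by rewrite permKV.
rewrite re hd; apply: le_trans (fB ((tu^-1)%g r)); rewrite le_eqVlt; apply/orP; left; apply/eqP.
apply: eq_bigr => i _; by rewrite permK hB.
Qed.

Lemma fs_one (I RA RB : finType) (c : I -> int)
  (A : RA -> I -> int) (b : RA -> int) (B : RB -> I -> int) (d : RB -> int) :
  formulation_sym c A b B d 1%g.
Proof.
split; first by move=> i; rewrite perm1.
split; [exists 1%g | exists 1%g]; by split=> *; rewrite !perm1.
Qed.

Lemma fs_mul (I RA RB : finType) (c : I -> int)
  (A : RA -> I -> int) (b : RA -> int) (B : RB -> I -> int) (d : RB -> int) p q :
  formulation_sym c A b B d p -> formulation_sym c A b B d q ->
  formulation_sym c A b B d (p * q)%g.
Proof.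
case=> hc [[sg [hA hb]] [tu [hB hd]]] [hc' [[sg' [hA' hb']] [tu' [hB' hd']]]].
split; first by move=> i; rewrite permM hc' hc.
split; [exists (sg * sg')%g | exists (tu * tu')%g]; split=> *;
  by rewrite !permM ?hA' ?hA ?hb' ?hb ?hB' ?hB ?hd' ?hd.
Qed.

Lemma rowperm_ex (I RA : finType) (A : RA -> I -> int) (pi : {perm I}) :
  (forall r1 r2, (forall i, A r1 i = A r2 i) -> r1 = r2) ->
  (forall r, exists r', forall i, A r' (pi i) = A r i) ->
  exists sg : {perm RA}, forall r i, A (sg r) (pi i) = A r i.
Proof.
move=> Ainj ex.
have ex' r : exists r', [forall i, A r' (pi i) == A r i].
  by case: (ex r) => r' h; exists r'; apply/forallP => i; rewrite h.
pose f r := xchoose (ex' r).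
have hf r i : A (f r) (pi i) = A r i by have /forallP/(_ i)/eqP := xchooseP (ex' r).
have finj : injective f.
  move=> r1 r2 e; apply: Ainj => i; by rewrite -hf e hf.
by exists (perm finj) => r i; rewrite permE hf.
Qed.

End G1.

Definition hd {k s : nat} (x y : idx k s) : {set 'I_k} := [set j | x j != y j].
Definition dist {k s : nat} (x y : idx k s) : nat := #|hd x y|.

Lemma in_hd k s (x y : idx k s) j : (j \in hd x y) = (x j != y j).
Proof. by rewrite inE. Qed.

Lemma dist0 k s (x : idx k s) : dist x x = 0.
Proof. by apply/eqP; rewrite cards_eq0; apply/eqP/setP=> j; rewrite in_hd eqxx inE. Qed.

Lemma dist_sym k s (x y : idx k s) : dist x y = dist y x.
Proof. by apply: eq_card => j; rewrite !in_hd eq_sym. Qed.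

Lemma dist_le1 k s (x y : idx k s) c : (forall j, j != c -> x j = y j) -> dist x y <= 1.
Proof.
move=> h; rewrite -(cards1 c); apply: subset_leq_card; apply/subsetP => j.
rewrite in_hd inE; apply: contraR => /h ->; by rewrite eqxx.
Qed.

Lemma dist_step k s m (x y : idx k s) :
  dist x y <= m.+1 <-> exists z, dist x z <= m /\ dist z y <= 1.
Proof.
split.
  case: (set_0Vmem (hd x y)) => [e|[j0 hj0]].
    by move=> _; exists y; split; [rewrite /dist e cards0 | rewrite dist0].
  move=> h; exists [ffun j => if j == j0 then x j else y j]; split.
    rewrite /dist.
    have -> : hd x [ffun j => if j == j0 then x j else y j] = hd x y :\ j0.
      apply/setP=> j; rewrite !inE ffunE; case: (j =P j0) => [->|_]; by rewrite ?eqxx.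
    move: h; rewrite /dist (cardsD1 j0 (hd x y)) hj0; by [].
  apply: (@dist_le1 _ _ _ _ j0) => j; rewrite ffunE; by move/negbTE->.
case=> z [h1 h2]; apply: leq_trans (_ : #|hd x z :|: hd z y| <= _).
  apply: subset_leq_card; apply/subsetP => j; rewrite !inE.
  by case: (x j =P z j) => [->|] //=.
rewrite cardsU; move: h1 h2; rewrite /dist; lia.
Qed.

Lemma iso_of_le1 k s (f : {perm idx k s}) :
  (forall x y, (dist (f x) (f y) <= 1) = (dist x y <= 1)) ->
  forall x y, dist (f x) (f y) = dist x y.
Proof.
move=> h1.
have H m : forall x y, (dist (f x) (f y) <= m) <-> (dist x y <= m).
  elim: m => [|m IH] x y.
    rewrite !leqn0 /dist !cards_eq0 -!subset0; split=> /subsetP H; apply/subsetP=> j hj.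
      have : f x = f y.
        apply/ffunP => j'; apply/eqP; apply: contraT => ne.
        by have := H j'; rewrite in_hd ne inE => /(_ isT).
      by move/perm_inj => e; move: hj; rewrite e in_hd eqxx.
    have e : x = y.
      by apply/ffunP => j'; apply/eqP; apply: contraT => ne; have := H j'; rewrite in_hd ne inE => /(_ isT).
    by move: hj; rewrite e in_hd eqxx.
  rewrite !dist_step; split.
    case=> z [hz1 hz2]; exists ((f^-1)%g z); rewrite -(IH x) -h1 permKV; by split.
  case=> z [hz1 hz2]; exists (f z); rewrite IH h1; by split.
move=> x y; apply/eqP; rewrite eqn_leq; apply/andP; split.
  by apply/H.
by apply/H.
Qed.

Definition Wf {k s : nat} (rho : {perm 'I_k}) (tau : {ffun 'I_k -> {perm 'I_s}})
  (i : idx k s) : idx k s := [ffun j => tau j (i (rho j))].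

Lemma other_ex s (w : 'I_s) : 1 < s -> exists w' : 'I_s, w' != w.
Proof.
move=> hs; have h0 : 0 < s by apply: ltnW.
case: (val w =P 0) => e.
  by exists (Ordinal hs); apply/eqP => /(f_equal val) /=; rewrite e.
by exists (Ordinal h0); apply/eqP => /(f_equal val) /= /esym.
Qed.

Lemma dist_swap k s (p q q' : idx k s) c :
  (forall j, j != c -> q j = q' j) ->
  dist p q + (p c != q' c) = dist p q' + (p c != q c).
Proof.
move=> h; rewrite /dist (cardsD1 c (hd p q)) (cardsD1 c (hd p q')) !in_hd.
have -> : hd p q :\ c = hd p q' :\ c.
  apply/setP => j; rewrite !inE; case: (j =P c) => //= /eqP /h ->; by [].
move: (p c != q c) (p c != q' c) (#|_ :\ c|) => b1 b2 n.
by case: b1; case: b2 => /=; lia.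
Qed.

Lemma iso_W k s (f : {perm idx k s}) (a0 : 'I_s) :
  1 < s -> (forall x y, dist (f x) (f y) = dist x y) ->
  exists rho tau, forall i, f i = Wf rho tau i.
Proof.
move=> hs hiso.
have [a1 ha1] := other_ex a0 hs.
pose x0 : idx k s := [ffun _ => a0].
pose y0 := f x0.
pose e j v : idx k s := [ffun j' => if j' == j then v else a0].
have e0 j : e j a0 = x0 by apply/ffunP => j'; rewrite !ffunE; case: ifP.
have de j v : (forall j', j' != j -> e j v j' = x0 j') by move=> j' /negbTE h; rewrite !ffunE h.
have dxe j v : dist x0 (e j v) = (v != a0).
  have h := dist_swap x0 (de j v); rewrite eqxx addn0 dist0 in h.
  by rewrite h /= !ffunE eqxx eq_sym.
have hy0 x : dist y0 (f x) = dist x0 x by rewrite /y0 hiso.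
pose rho0 j := odflt j [pick c in hd y0 (f (e j a1))].
have L1 j : hd y0 (f (e j a1)) = [set rho0 j].
  have : dist y0 (f (e j a1)) == 1.
    by rewrite hy0 dxe ha1.
  case/cards1P => c hc; rewrite /rho0 hc; case: pickP => [c' |].
    by rewrite inE => /eqP ->.
  by move/(_ c); rewrite inE eqxx.
have L1' j c : c != rho0 j -> f (e j a1) c = y0 c.
  move=> ne; apply/eqP; rewrite eq_sym; apply: contraT => h.
  by move: (in_hd y0 (f (e j a1)) c); rewrite h L1 inE (negbTE ne).
have L2 j v c : c != rho0 j -> f (e j v) c = y0 c.
  case: (v =P a0) => [->|hv]; first by rewrite e0.
  have : dist y0 (f (e j v)) == 1.
    by rewrite hy0 dxe; move/eqP: hv => ->.
  case/cards1P => c' hc'.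
  have hc'r : c' = rho0 j.
    apply/eqP; apply: contraT => ne.
    have : dist (f (e j v)) (f (e j a1)) <= 1.
      by rewrite hiso; apply: (@dist_le1 _ _ _ _ j) => j' hj'; rewrite !de.
    move=> H; suff : 1 < dist (f (e j v)) (f (e j a1)) by rewrite ltnNge H.
    have <- : #|[set c'; rho0 j]| = 2 by rewrite cards2 ne.
    apply: subset_leq_card; apply/subsetP => z; rewrite !inE => /orP [] /eqP ->.
      rewrite L1' //.
      by move: (in_hd y0 (f (e j v)) c'); rewrite hc' inE eqxx eq_sym => <-.
    have h1 : f (e j v) (rho0 j) = y0 (rho0 j).
      apply/eqP; rewrite eq_sym; apply: contraT => h.
      by move: (in_hd y0 (f (e j v)) (rho0 j)); rewrite h hc' inE (eq_sym (rho0 j)) (negbTE ne).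
    by rewrite h1; move: (in_hd y0 (f (e j a1)) (rho0 j)); rewrite L1 inE eqxx => <-.
  move=> ne; apply/eqP; rewrite eq_sym; apply: contraT => h.
  by move: (in_hd y0 (f (e j v)) c); rewrite h hc' hc'r inE (negbTE ne).
have ha1' : (a0 != a1) by rewrite eq_sym.
have rinj : injective rho0.
  move=> j j' er; apply/eqP; apply: contraT => ne.
  have ne' : j' != j by rewrite eq_sym.
  have : dist (f (e j a1)) (f (e j' a1)) <= 1.
    apply: (@dist_le1 _ _ _ _ (rho0 j)) => c hc.
    by rewrite (L2 _ _ _ hc) L2 // -er.
  rewrite hiso => H; suff : 1 < dist (e j a1) (e j' a1) by rewrite ltnNge H.
  have <- : #|[set j; j']| = 2 by rewrite cards2 ne.
  apply: subset_leq_card; apply/subsetP => z; rewrite !inE => /orP [] /eqP ->;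
    by rewrite !ffunE !eqxx ?(negbTE ne) ?(negbTE ne').
pose rho := perm rinj.
pose g j v := f (e j v) (rho0 j).
have hy0' x : dist (f x) y0 = dist x x0 by rewrite /y0 hiso.
have gy0 j : g j a0 = y0 (rho0 j) by rewrite /g e0.
have main x j : f x (rho0 j) = g j (x j).
  have E v : (x j != a0) + (f x (rho0 j) != g j v) = (x j != v) + (f x (rho0 j) != g j a0).
    have h1 := dist_swap x (de j v).
    have h2 := dist_swap (f x) (L2 j v).
    rewrite hiso hy0' -gy0 in h2.
    rewrite !ffunE eqxx in h1.
    move: h1 h2; rewrite /g.
    case: (x j != a0); case: (x j != v); case: (f x (rho0 j) != _); case: (f x (rho0 j) != _); lia.
  case: (x j =P a0) => hx.
    move: (E a1); rewrite hx eqxx ha1' /=.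
    by case: (f x (rho0 j) =P g j a0) => //; case: (_ != _).
  move: (E (x j)); rewrite eqxx; move/eqP: hx => -> /=.
  by case: (f x (rho0 j) =P g j (x j)) => //; case: (_ != _).
have rE c : rho0 ((rho^-1)%g c) = c by have := permKV rho c; rewrite permE.
have ginj j : injective (g j).
  move=> v v' ev.
  have : f (e j v) = f (e j v').
    apply/ffunP => c; rewrite -(rE c) !main !ffunE.
    by case: ((rho^-1)%g c =P j) => [->|].
  by move/perm_inj => ee; have := congr1 (fun y : idx k s => y j) ee; rewrite /= !ffunE !eqxx.
exists (rho^-1)%g, [ffun j' => perm (ginj ((rho^-1)%g j'))] => i.
by apply/ffunP => c; rewrite !ffunE permE -main rE.
Qed.

Definition compat {k s t : nat} (r : oa_row k s t) (x : idx k s) : bool :=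
  [forall j, (sval r j == None) || (sval r j == Some (x j))].

Lemma oa_A_compat k s t (r : oa_row k s t) x : oa_A r x = Posz (compat r x).
Proof. by rewrite /oa_A /compat; case: ifP. Qed.

Definition dom {k s t : nat} (r : oa_row k s t) : {set 'I_k} := [set j | sval r j != None].

Lemma card_dom k s t (r : oa_row k s t) : #|dom r| = t.
Proof. by apply/eqP; exact: (valP r). Qed.

Lemma compat_val k s t (r : oa_row k s t) x j :
  compat r x -> sval r j = if j \in dom r then Some (x j) else None.
Proof.
move/forallP/(_ j); rewrite inE; case/orP => /eqP ->; by [].
Qed.

Definition Ncnt {k s : nat} (t : nat) (x y : idx k s) : nat :=
  #|[set r : oa_row k s t | compat r x && compat r y]|.

Lemma Ncnt_eq k s t (x y : idx k s) : Ncnt t x y = 'C(#|~: hd x y|, t).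
Proof.
rewrite -cards_draws /Ncnt.
set S := [set r : oa_row k s t | compat r x && compat r y].
rewrite -(@card_in_imset _ _ dom S).
  apply: eq_card => J; rewrite inE; apply/imsetP/andP.
    case=> r; rewrite inE => /andP [cx cy] ->; split; last by rewrite card_dom.
    apply/subsetP => j hj; rewrite !inE negbK.
    have := compat_val j cx; rewrite (compat_val j cy) hj; by case=> ->.
  case=> hsub hcard.
  pose a : {ffun 'I_k -> option 'I_s} := [ffun j => if j \in J then Some (x j) else None].
  have ea : [set j | a j != None] = J by apply/setP => j; rewrite !inE ffunE; case: ifP.
  have pa : #|[set j | a j != None]| == t by rewrite ea.
  exists (exist _ a pa); last by apply/setP => j; rewrite /dom /= -ea.
  rewrite inE; apply/andP; split; apply/forallP => j /=; rewrite ffunE; case: ifP => hj //.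
    by rewrite eqxx orbT.
  move/subsetP: hsub => /(_ j hj); rewrite !inE negbK => /eqP ->; by rewrite eqxx orbT.
move=> r1 r2; rewrite !inE => /andP [c1 _] /andP [c2 _] e.
apply: val_inj; apply/ffunP => j.
by rewrite (compat_val j c1) (compat_val j c2) e.
Qed.

Lemma Ncnt_perm k s t (pi : {perm idx k s}) (sg : {perm oa_row k s t}) :
  (forall r i, oa_A (sg r) (pi i) = oa_A r i) ->
  forall x y, Ncnt t (pi x) (pi y) = Ncnt t x y.
Proof.
move=> hA x y.
have hc r i : compat (sg r) (pi i) = compat r i.
  by have := hA r i; rewrite !oa_A_compat => -[]; case: (compat _ _); case: (compat _ _).
rewrite /Ncnt -[RHS](card_imset _ (@perm_inj _ sg)); apply: eq_card => r.
rewrite inE; apply/idP/imsetP.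
  move=> h; exists ((sg^-1)%g r); last by rewrite permKV.
  by rewrite inE -(hc _ x) -(hc _ y) permKV.
by case=> r0; rewrite inE => h ->; rewrite !hc.
Qed.

Lemma bin_arith k t d : 1 <= t -> t <= k - 1 -> 1 < d -> 'C(k - d, t) < 'C(k - 1, t).
Proof.
case: k => [|[|k']] t1 tk h2; try lia.
case: t t1 tk => [|t'] t1 tk; first by [].
apply: leq_trans (_ : 'C(k', t'.+1) < _).
  by rewrite ltnS; apply: leq_bin2l; lia.
rewrite subn1 /= binS -addn1 leq_add2l bin_gt0; lia.
Qed.

Lemma adj_bin k s t (x y : idx k s) : 1 <= t -> t <= k - 1 ->
  (dist x y <= 1) = ('C(k - 1, t) <= 'C(#|~: hd x y|, t)).
Proof.
move=> t1 tk.
have hc : #|~: hd x y| = k - dist x y.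
  by have := cardsC (hd x y); rewrite card_ord /dist; lia.
rewrite hc; apply/idP/idP => h.
  by apply: leq_bin2l; lia.
apply: contraTT h; rewrite -!ltnNge => h2.
exact: bin_arith.
Qed.

Lemma fs_W k s t lam pmax (pi : {perm idx k s}) :
  1 < s -> 1 <= t -> t <= k - 1 -> oa_form_sym k s t lam pmax pi ->
  exists rho tau, forall i, pi i = Wf rho tau i.
Proof.
move=> hs t1 tk [_ [[sg [hA _]] _]].
have a0 : 'I_s := Ordinal (ltnW hs).
apply: (iso_W a0 hs); apply: iso_of_le1 => x y.
by rewrite !(adj_bin _ _ t1 tk) -!Ncnt_eq (Ncnt_perm hA).
Qed.

Lemma Wf_inj k s (rho : {perm 'I_k}) (tau : {ffun 'I_k -> {perm 'I_s}}) : injective (Wf rho tau).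
Proof.
move=> x y e; apply/ffunP => c; rewrite -(permKV rho c).
by have := congr1 (fun z : idx k s => z ((rho^-1)%g c)) e; rewrite !ffunE => /perm_inj.
Qed.

Definition Wp {k s : nat} (rho : {perm 'I_k}) (tau : {ffun 'I_k -> {perm 'I_s}}) : {perm idx k s} :=
  perm (@Wf_inj k s rho tau).

Lemma WpE k s rho tau (i : idx k s) : Wp rho tau i = Wf rho tau i.
Proof. by rewrite permE. Qed.

Lemma Wmul k s (rho rho' : {perm 'I_k}) (tau tau' : {ffun 'I_k -> {perm 'I_s}}) :
  (Wp rho tau * Wp rho' tau')%g = Wp (rho' * rho)%g [ffun j => (tau (rho' j) * tau' j)%g].
Proof.
by apply/permP => i; rewrite permM !WpE; apply/ffunP => j; rewrite !ffunE !permM.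
Qed.

Definition Wset (k s : nat) : {set {perm idx k s}} :=
  [set Wp x.1 x.2 | x : {perm 'I_k} * {ffun 'I_k -> {perm 'I_s}}].

Lemma Wp_in k s rho tau : Wp rho tau \in Wset k s.
Proof. by apply/imsetP; exists (rho, tau). Qed.

Lemma W_group k s : group_set (Wset k s).
Proof.
apply/group_setP; split.
  have -> : (1 : {perm idx k s})%g = Wp 1%g [ffun=> 1%g].
    by apply/permP => i; rewrite perm1 WpE; apply/ffunP => j; rewrite !ffunE !perm1.
  exact: Wp_in.
move=> p q /imsetP [[r t] _ ->] /imsetP [[r' t'] _ ->]; rewrite Wmul; exact: Wp_in.
Qed.

Lemma gens_W k s : iso_gens k s \subset Wset k s.
Proof.
apply/subsetP => pi; rewrite inE => /orP [/existsP [rho /forallP h]|/existsP [j0 /existsP [tau /forallP h]]].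
  have -> : pi = Wp rho [ffun=> 1%g].
    by apply/permP => i; rewrite WpE (eqP (h i)); apply/ffunP => j; rewrite !ffunE perm1.
  exact: Wp_in.
have -> : pi = Wp 1%g [ffun j => if j == j0 then tau else 1%g].
  apply/permP => i; rewrite WpE (eqP (h i)); apply/ffunP => j; rewrite !ffunE perm1.
  by case: ifP; rewrite ?perm1.
exact: Wp_in.
Qed.

Lemma Giso_W k s : Giso k s \subset Wset k s.
Proof.
have : <<iso_gens k s>>%g \subset (Group (W_group k s)) by rewrite gen_subG; exact: gens_W.
by [].
Qed.

Lemma W_Giso k s : Wset k s \subset Giso k s.
Proof.
apply/subsetP => p /imsetP [[rho tau] _ ->] /=.
have -> : Wp rho tau = (Wp rho [ffun=> 1%g] * Wp 1%g tau)%g.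
  by apply/permP => i; rewrite permM !WpE; apply/ffunP => j; rewrite !ffunE !perm1.
apply: groupM.
  apply: mem_gen; rewrite inE; apply/orP; left; apply/existsP; exists rho.
  by apply/forallP => i; rewrite WpE; apply/eqP/ffunP => j; rewrite !ffunE perm1.
pose taul (l : seq 'I_k) := [ffun j => if j \in l then tau j else 1%g].
have H l : Wp 1%g (taul l) \in Giso k s.
  elim: l => [|j l IH].
    have -> : Wp 1%g (taul [::]) = 1%g.
      by apply/permP => i; rewrite WpE perm1; apply/ffunP => j; rewrite !ffunE !perm1.
    exact: group1.
  case: (boolP (j \in l)) => hj.
    have -> : taul (j :: l) = taul l.
      by apply/ffunP => j'; rewrite !ffunE in_cons; case: (j' =P j) => [->|] //=; rewrite hj.
    exact: IH.
  have -> : Wp 1%g (taul (j :: l)) = (Wp 1%g (taul l) * Wp 1%g [ffun j' => if j' == j then tau j else 1%g])%g.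
    apply/permP => i; rewrite permM !WpE; apply/ffunP => j'; rewrite !ffunE !perm1 in_cons.
    case: (j' =P j) => [->|ne] /=; first by rewrite (negbTE hj) perm1.
    by rewrite perm1.
  apply: groupM => //; apply: mem_gen; rewrite inE; apply/orP; right.
  apply/existsP; exists j; apply/existsP; exists (tau j); apply/forallP => i.
  rewrite WpE; apply/eqP/ffunP => j'; rewrite !ffunE perm1; by case: ifP; rewrite ?perm1.
have -> : Wp 1%g tau = Wp 1%g (taul (enum 'I_k)).
  by apply/permP => i; rewrite !WpE; apply/ffunP => j; rewrite !ffunE mem_enum.
exact: H.
Qed.

Lemma Giso_eq k s : Giso k s = Wset k s :> {set _}.
Proof. by apply/eqP; rewrite eqEsubset Giso_W W_Giso. Qed.

Lemma Wp_inj k s : 1 < s ->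
  injective (fun x : {perm 'I_k} * {ffun 'I_k -> {perm 'I_s}} => Wp x.1 x.2).
Proof.
move=> hs [rho tau] [rho' tau'] /= e.
have E i : Wf rho tau i = Wf rho' tau' i by rewrite -!WpE e.
have a : 'I_s := Ordinal (ltnW hs).
have er : rho = rho'.
  apply/permP => j; apply/eqP; apply: contraT => ne.
  have [b hb] := other_ex a hs.
  have h0 := congr1 (fun z : idx k s => z j) (E [ffun=> a]).
  have h1 := congr1 (fun z : idx k s => z j) (E [ffun c => if c == rho j then b else a]).
  move: h0 h1; rewrite /= !ffunE eqxx eq_sym (negbTE ne) => <- /perm_inj eb.
  by move: hb; rewrite eb eqxx.
subst rho'; congr (_, _); apply/ffunP => j; apply/permP => v.
by have := congr1 (fun z : idx k s => z j) (E [ffun=> v]); rewrite /= !ffunE.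
Qed.

Lemma card_Giso k s : 1 < s -> #|Giso k s| = k`! * (s`!) ^ k.
Proof.
move=> hs; rewrite Giso_eq /Wset card_imset; last exact: Wp_inj.
by rewrite card_prod card_Sn card_ffun card_Sn card_ord.
Qed.

Lemma blk k s t (r1 r2 : oa_row k s t) : 1 < s ->
  (forall i, compat r1 i -> compat r2 i) ->
  forall j, sval r2 j = None \/ sval r2 j = sval r1 j.
Proof.
move=> hs h j; case e2: (sval r2 j) => [w|]; last by left.
right; have [w' hw'] := other_ex w hs.
pose i : idx k s := [ffun j' => if sval r1 j' is Some v then v else if j' == j then w' else w].
have ci : compat r1 i.
  apply/forallP => j'; rewrite ffunE; by case: (sval r1 j') => [v|] //=; rewrite eqxx orbT.
move/forallP: (h i ci) => /(_ j); rewrite e2 ffunE /=.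
case e1: (sval r1 j) => [v|] /=.
  by move/eqP => [->].
by rewrite eqxx => /eqP [] ew; move: hw'; rewrite -ew eqxx.
Qed.

Lemma oa_A_inj k s t (r1 r2 : oa_row k s t) : 1 < s ->
  (forall i, oa_A r1 i = oa_A r2 i) -> r1 = r2.
Proof.
move=> hs h.
have hc i : compat r1 i = compat r2 i.
  by have := h i; rewrite !oa_A_compat => -[]; case: (compat _ _); case: (compat _ _).
have h12 : forall j, sval r2 j = None \/ sval r2 j = sval r1 j.
  by apply: blk hs _ => i; rewrite hc.
have h21 : forall j, sval r1 j = None \/ sval r1 j = sval r2 j.
  by apply: blk hs _ => i; rewrite hc.
apply: val_inj; apply/ffunP => j.
by case: (h12 j) (h21 j) => -> [] ->.
Qed.

Lemma oa_fs_rows k s t lam pmax (pi : {perm idx k s}) : 1 < s ->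
  (forall r : oa_row k s t, exists r' : oa_row k s t, forall i, oa_A r' (pi i) = oa_A r i) ->
  oa_form_sym k s t lam pmax pi.
Proof.
move=> hs hr; split; first by [].
split.
  have [sg hsg] := rowperm_ex (fun r1 r2 => oa_A_inj hs) hr.
  by exists sg; split.
have tinj : injective (fun r : bool * idx k s => (r.1, pi r.2)).
  by move=> [b1 x1] [b2 x2] [-> /perm_inj ->].
exists (perm tinj); split => r; rewrite permE //.
by move=> i; rewrite /oa_B /= (inj_eq perm_inj).
Qed.

Lemma W_fs k s t lam pmax rho tau : 1 < s -> oa_form_sym k s t lam pmax (Wp rho tau).
Proof.
move=> hs; apply: oa_fs_rows => // r.
pose a : {ffun 'I_k -> option 'I_s} := [ffun j => omap (tau j) (sval r (rho j))].
have pa : #|[set j | a j != None]| == t.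
  have -> : [set j | a j != None] = rho @^-1: dom r.
    by apply/setP => j; rewrite !inE ffunE; case: (sval r (rho j)).
  by rewrite card_preimset ?card_dom //; exact: perm_inj.
exists (exist _ a pa) => i; rewrite !oa_A_compat WpE; congr Posz.
have ej j : ((a j == None) || (a j == Some (Wf rho tau i j))) =
            ((sval r (rho j) == None) || (sval r (rho j) == Some (i (rho j)))).
  rewrite !ffunE; case: (sval r (rho j)) => [v|] //=.
  by apply/eqP/eqP => [[/perm_inj ->]|[->]].
congr nat_of_bool; rewrite /compat; apply/forallP/forallP => /= H j.
  by have := H ((rho^-1)%g j); rewrite ej permKV.
by rewrite ej; exact: H.
Qed.

Unset Implicit Arguments.

Theorem lemma8 (R : realFieldType) (k s t N pmax : nat) :
  2 <= s -> 1 <= t -> t <= k - 1 -> 0 < N -> s ^ t %| N ->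
  0 < pmax -> pmax <= N %/ s ^ t ->
  (forall pi : {perm idx k s},
      oa_form_sym k s t (N %/ s ^ t) pmax pi <-> pi \in Giso k s) /\
  #|Giso k s| = k`! * (s`!) ^ k /\
  (forall pi : {perm idx k s},
      oa_form_sym k s t (N %/ s ^ t) pmax pi ->
      oa_lp_sym R k s t (N %/ s ^ t) pmax pi) /\
  (exists S : {set {perm idx k s}},
      k`! * (s`!) ^ k <= #|S| /\
      forall pi, pi \in S -> oa_lp_sym R k s t (N %/ s ^ t) pmax pi).
Proof.
move=> hs t1 tk _ _ _ _.
have iff1 (pi : {perm idx k s}) : oa_form_sym k s t (N %/ s ^ t) pmax pi <-> pi \in Giso k s.
  split.
    move/(fs_W hs t1 tk) => [rho [tau h]].
    have -> : pi = Wp rho tau by apply/permP => i; rewrite WpE h.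
    by rewrite Giso_eq; exact: Wp_in.
  rewrite Giso_eq => /imsetP [[rho tau] _ ->]; exact: W_fs.
have lp (pi : {perm idx k s}) : oa_form_sym k s t (N %/ s ^ t) pmax pi ->
    oa_lp_sym R k s t (N %/ s ^ t) pmax pi.
  exact: fs_lp.
split; first exact: iff1.
split; first exact: card_Giso.
split; first exact: lp.
exists (Giso k s); split; first by rewrite card_Giso.
by move=> pi /iff1; exact: lp.
Qed.
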